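(* For $(u,\rho)\in H_{0,\infty}(\mathbb R)\times L^2_{\rm const}(\mathbb R)$ let $X_e(x)=(x,\bar u(x),c,1,u_x(x),u_x^2(x)+\bar\rho^2(x),\bar\rho(x),k)$ and write $g(u,\rho)$ for the function $x\mapsto g(X_e(x))$. Then $g(u,\rho)-1\in L^1(\mathbb R)$, and: (i) If $(u_1,\rho_1),(u_2,\rho_2)\in H_{0,\infty}(\mathbb R)\times L^2_{\rm const}(\mathbb R)$ satisfy $\operatorname{meas}(\{x:(\rho_1(x)=0\text{ and }\rho_2(x)\ne0)\text{ or }(\rho_1(x)\ne0\text{ and }\rho_2(x)=0)\})=0$, then $$\|g(u_1,\rho_1)-g(u_2,\rho_2)\|_{L^1}\le C\big(\|u_{1,x}-u_{2,x}\|_{L^2}+\|\bar\rho_1-\bar\rho_2\|_{L^2}\big),$$ where $C$ depends only on the $L^2$-norms of $u_{1,x},u_{2,x},\bar\rho_1,\bar\rho_2$. (ii) If $(u_n,\rho_n)\to(u,\rho)$ in $H_{0,\infty}(\mathbb R)\times L^2_{\rm const}(\mathbb R)$ and for all $n$, $\operatorname{meas}(\{x:(\rho(x)=0\text{ and }\rho_n(x)\ne0)\text{ or }(\rho(x)\ne0\text{ and }\rho_n(x)=0)\})=0$, then $g(u_n,\rho_n)-1\to g(u,\rho)-1$ in $L^1(\mathbb R)$.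
   Context: Fix a smooth $\chi:\mathbb R\to\mathbb R$ with $\chi'\ge0$, $\chi=0$ on $(-\infty,0]$, $\chi=1$ on $[1,\infty)$. $H_{0,\infty}(\mathbb R)=\{u=\bar u+c\chi:\bar u\in H^1(\mathbb R),c\in\mathbb R\}$ with norm $\|\bar u\|_{H^1}+|c|$; $L^2_{\rm const}(\mathbb R)=\{\rho=\bar\rho+k:\bar\rho\in L^2(\mathbb R),k\in\mathbb R\}$ with norm $\|\bar\rho\|_{L^2}+|k|$. For $x\in\mathbb R^8$: $g_1(x)=|x_5|+2|x_7x_8|+2x_4$, $g_2(x)=x_4+x_6$, $\Omega_1=\{x:g_1(x)\le g_2(x),\ x_5\le0,\ x_7+x_8x_4=0\}$, and $g=g_1$ on $\Omega_1$, $g=g_2$ on $\mathbb R^8\setminus\Omega_1$. *)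

(* Defs.v *)
From mathcomp Require Import all_boot all_order all_algebra.
From mathcomp Require Import all_classical all_reals all_analysis.
Import Order.TTheory GRing.Theory Num.Theory.
Set Implicit Arguments. Unset Strict Implicit. Unset Printing Implicit Defensive.
Local Open Scope ring_scope.
Local Open Scope classical_set_scope.

Section defs.
Context {R : realType}.
Local Notation mu := (@lebesgue_measure R).

Definition L2fun (f : R -> R) : Prop :=
  measurable_fun setT f /\ mu.-integrable setT (fun x => (f x ^+ 2)%:E).

Definition L2norm (f : R -> R) : R :=
  Num.sqrt (Rintegral mu setT (fun x => f x ^+ 2)).

Definition L1norm (f : R -> R) : R :=
  Rintegral mu setT (fun x => `|f x|).

(* f' is the (weak) derivative of f: f is the absolutely continuous
   primitive of f' *)
Definition weak_deriv (f f' : R -> R) : Prop :=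
  forall a b : R, a <= b -> f b - f a = Rintegral mu `[a, b] f'.

(* ubar in H^1(R) with derivative ubar' (1-d characterization of H^1) *)
Definition H1fun (f f' : R -> R) : Prop :=
  [/\ L2fun f, L2fun f' & weak_deriv f f'].

Definition H1norm (f f' : R -> R) : R :=
  Num.sqrt (L2norm f ^+ 2 + L2norm f' ^+ 2).

Definition smooth (f : R -> R) : Prop :=
  forall (n : nat) (x : R), derivable (iter n (fun h : R -> R => derive1 h) f) x 1.

Definition cutoff (chi : R -> R) : Prop :=
  [/\ smooth chi, (forall x, 0 <= derive1 chi x),
      (forall x, x <= 0 -> chi x = 0) & (forall x, 1 <= x -> chi x = 1)].

Definition g1 (x1 x2 x3 x4 x5 x6 x7 x8 : R) : R :=
  `|x5| + 2 * `|x7 * x8| + 2 * x4.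
Definition g2 (x1 x2 x3 x4 x5 x6 x7 x8 : R) : R := x4 + x6.
Definition Omega1 (x1 x2 x3 x4 x5 x6 x7 x8 : R) : bool :=
  [&& g1 x1 x2 x3 x4 x5 x6 x7 x8 <= g2 x1 x2 x3 x4 x5 x6 x7 x8,
      x5 <= 0 & x7 + x8 * x4 == 0].
Definition g (x1 x2 x3 x4 x5 x6 x7 x8 : R) : R :=
  if Omega1 x1 x2 x3 x4 x5 x6 x7 x8 then g1 x1 x2 x3 x4 x5 x6 x7 x8
  else g2 x1 x2 x3 x4 x5 x6 x7 x8.

(* u = ubar + c chi, u_x = ubar' + c chi' *)
Definition ux (chi ubar' : R -> R) (c : R) : R -> R :=
  fun x => ubar' x + c * derive1 chi x.

(* x |-> g(X_e(x)) for u = ubar + c chi, rho = rhobar + k *)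
Definition gfun (chi ubar ubar' : R -> R) (c : R) (rhobar : R -> R) (k : R)
  : R -> R :=
  fun x => let v := ux chi ubar' c x in
    g x (ubar x) c 1 v (v ^+ 2 + rhobar x ^+ 2) (rhobar x) k.

Definition zero_compat (rb1 : R -> R) (k1 : R) (rb2 : R -> R) (k2 : R) : Prop :=
  mu.-negligible [set x | (rb1 x + k1 = 0 /\ rb2 x + k2 <> 0)
                       \/ (rb1 x + k1 <> 0 /\ rb2 x + k2 = 0)].

End defs.

(* Main.v *)
Require Import Defs.
From mathcomp Require Import all_boot all_order all_algebra.
From mathcomp Require Import all_classical all_reals all_analysis.
From mathcomp Require Import ring lra.
Import Order.TTheory GRing.Theory Num.Theory.
Import numFieldNormedType.Exports.
Import measurable_realfun.
Local Open Scope ring_scope.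
Local Open Scope classical_set_scope.
Section chi.
Context {R : realType} {chi : R -> R} (Hchi : cutoff chi).

Lemma chi'_zero x : x < 0 \/ 1 < x -> derive1 chi x = 0.
Proof.
case: Hchi => _ _ c0 c1.
case=> hx.
  rewrite derive1E (@near_eq_derive _ _ _ chi (cst 0)) ?derive_cst//.
  near=> y; apply: c0; apply: ltW; near: y; exact: lt_nbhsl.
rewrite derive1E (@near_eq_derive _ _ _ chi (cst 1)) ?derive_cst//.
near=> y; apply: c1; apply: ltW; near: y; exact: lt_nbhsr.
Unshelve. all: by end_near. Qed.

Lemma chi'_cont : continuous (derive1 chi).
Proof.
case: Hchi => sm _ _ _ x.
apply/differentiable_continuous; rewrite -derivable1_diffP.
exact: (sm 1%N x).
Qed.

Lemma chi'_bound : exists M : R, forall x, `|derive1 chi x| <= M * (\1_`[0, 1] x : R).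
Proof.
case: Hchi => _ p _ _.
have [c _ hc] := @EVT_max R (derive1 chi) 0 1 ler01
  (continuous_subspaceT chi'_cont).
exists (derive1 chi c) => x.
have [/orP[]|] := boolP ((x < 0) || (1 < x)).
- by move=> h; rewrite chi'_zero ?normr0 ?mulr_ge0 ?p//; left.
- by move=> h; rewrite chi'_zero ?normr0 ?mulr_ge0 ?p//; right.
rewrite negb_or -!leNgt => /andP[h0 h1].
rewrite indicE mem_set/=; last by rewrite in_itv/= h0 h1.
rewrite mulr1 ger0_norm ?p//; apply: hc; by rewrite in_itv/= h0 h1.
Qed.
End chi.

Section alg.
Context {R : realType}.

Definition Gp (a r k : R) : R := g 0 0 0 1 a (a ^+ 2 + r ^+ 2) r k.

Lemma sq_diff (a b : R) : `|a ^+ 2 - b ^+ 2| <= (`|a| + `|b|) * `|a - b|.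
Proof.
rewrite subr_sqr normrM mulrC ler_wpM2r//; exact: ler_normD.
Qed.

Lemma hA (a1 a2 : R) : 1 <= `|a1| -> `|a1 - a2| <= (`|a1| + `|a2|) * `|a1 - a2|.
Proof.
move=> h; rewrite -[X in X <= _]mul1r ler_wpM2r//.
by apply: (le_trans h); rewrite lerDl.
Qed.

Lemma hB (a1 a2 : R) : a1 <= 0 -> 0 <= a2 -> a2 ^+ 2 <= (`|a1| + `|a2|) * `|a1 - a2|.
Proof.
move=> h1 h2; rewrite (ger0_norm h2) (ler0_norm h1) (ler0_norm); last lra.
nra.
Qed.

Lemma hC (a r : R) : `|a| + 2 * r ^+ 2 + 2 <= 1 + (a ^+ 2 + r ^+ 2) -> 1 <= `|a|.
Proof.
move=> h; have e : a ^+ 2 = `|a| ^+ 2 by rewrite real_normK ?num_real.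
have n0 : 0 <= `|a| by [].
rewrite e in h; nra.
Qed.

Lemma Gp_bound a1 r1 k1 a2 r2 k2 :
  (r1 + k1 = 0 <-> r2 + k2 = 0) ->
  `|Gp a1 r1 k1 - Gp a2 r2 k2| <=
    2 * ((`|a1| + `|a2|) * `|a1 - a2|) + 2 * ((`|r1| + `|r2|) * `|r1 - r2|).
Proof.
move=> hiff.
have hX := sq_diff a1 a2; have hY := sq_diff r1 r2.
set X := (`|a1| + `|a2|) * `|a1 - a2|; set Y := (`|r1| + `|r2|) * `|r1 - r2|.
have hX0 : 0 <= X by rewrite mulr_ge0// addr_ge0.
have hY0 : 0 <= Y by rewrite mulr_ge0// addr_ge0.
have hd : `| `|a1| - `|a2| | <= `|a1 - a2| by apply: ler_dist_dist.
rewrite /Gp /g /Omega1 /g1 /g2 !mulr1.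
have [z1|nz1] := eqVneq (r1 + k1) 0.
- have z2 : r2 + k2 = 0 by apply/hiff.
  have -> : k1 = - r1 by move: z1; lra.
  have -> : k2 = - r2 by move: z2; lra.
  rewrite !subrr !eqxx !andbT !mulrN !normrN !normrM -!expr2 !real_normK ?num_real//.
  have U := @hC a1 r1; have V := @hC a2 r2.
  have W1 := @hA a1 a2; have W2 := @hA a2 a1.
  have B1 := @hB a1 a2; have B2 := @hB a2 a1.
  rewrite [`|a2 - a1|]distrC [`|a2| + _]addrC -/X in W2 B2.
  rewrite -/X in W1 B1.
  have Z1 : 0 <= `|a1| by []. have Z2 : 0 <= `|a2| by [].
  move: hX hY hd; rewrite -/X -/Y !ler_norml => /andP[hX1 hX2] /andP[hY1 hY2] /andP[hd1 hd2].
  have hx : a1 <= 0 \/ 0 <= a1 by case: (lerP a1 0) => h; [left|right; apply: ltW].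
  have hy : a2 <= 0 \/ 0 <= a2 by case: (lerP a2 0) => h; [left|right; apply: ltW].
  case: ifP => [/andP[c1 s1]|/negbT]; case: ifP => [/andP[c2 s2]|/negbT].
  - have := W1 (U c1); move=> w; apply/andP; split; lra.
  - have := W1 (U c1) => w.
    have q1 : 0 <= r1 ^+ 2 by apply: sqr_ge0.
    have q2 : 0 <= r2 ^+ 2 by apply: sqr_ge0.
    rewrite negb_and -ltNge -ltNge => /orP[n2|n2].
      by apply/andP; split; lra.
    have := B1 s1 (ltW n2) => b; apply/andP; split; lra.
  - move=> n1; have := W2 (V c2) => w.
    have q1 : 0 <= r1 ^+ 2 by apply: sqr_ge0.
    have q2 : 0 <= r2 ^+ 2 by apply: sqr_ge0.
    move: n1; rewrite negb_and -ltNge -ltNge => /orP[n1|n1].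
      by apply/andP; split; lra.
    have := B2 s2 (ltW n1) => b; apply/andP; split; lra.
  - move=> _ _; apply/andP; split; lra.
- have nz2 : r2 + k2 != 0.
    by apply/eqP => h; move/eqP: nz1; apply; apply/hiff.
  rewrite (negPf nz2) !andbF.
  rewrite opprD addrACA subrr add0r opprD addrACA.
  apply: (le_trans (ler_normD _ _)).
  rewrite -/X -/Y in hX hY; lra.
Qed.
End alg.

Section L2.
Context {R : realType}.
Local Notation mu := (@lebesgue_measure R).
Local Notation mEP := measurable_realfun.measurable_EFinP.
Implicit Types f h : R -> R.

Lemma int_dom (f h : R -> R) : measurable_fun setT f ->
  mu.-integrable setT (EFin \o h) -> (forall x, `|f x| <= h x) ->
  mu.-integrable setT (EFin \o f).
Proof.
move=> mf ih hb; apply: (le_integrable _ _ _ ih) => //.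
  exact/mEP.
move=> x _ /=; rewrite lee_fin; apply: (le_trans (hb x)).
exact: ler_norm.
Qed.

Lemma int_D {f h : R -> R} : mu.-integrable setT (EFin \o f) ->
  mu.-integrable setT (EFin \o h) -> mu.-integrable setT (EFin \o (fun x => f x + h x)).
Proof.
move=> i1 i2; apply: (eq_integrable _ _ _ _ (integrableD _ i1 i2)) => //.
Qed.

Lemma int_Z (a : R) {f : R -> R} : mu.-integrable setT (EFin \o f) ->
  mu.-integrable setT (EFin \o (fun x => a * f x)).
Proof.
move=> i1; apply: (eq_integrable _ _ _ _ (integrableZl _ a i1)) => //.
Qed.

Lemma int_meas (f : R -> R) : mu.-integrable setT (EFin \o f) -> measurable_fun setT f.
Proof. by move=> /integrableP[h _]; apply/(mEP setT f). Qed.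

Lemma L2_meas {f} : L2fun f -> measurable_fun setT f.
Proof. by case. Qed.

Lemma L2_int {f} : L2fun f -> mu.-integrable setT (EFin \o (fun x => f x ^+ 2)).
Proof. by case. Qed.

Lemma L2_D {f h} : L2fun f -> L2fun h -> L2fun (fun x => f x + h x).
Proof.
move=> [mf if_] [mh ih]; split; first exact: measurable_funD.
apply: (@int_dom _ (fun x => 2 * f x ^+ 2 + 2 * h x ^+ 2)).
- by apply: measurable_funX; apply: measurable_funD.
- by apply: int_D; apply: int_Z.
move=> x; rewrite ger0_norm ?sqr_ge0//.
have := sqr_ge0 (f x - h x); lra.
Qed.

Lemma L2_Z a {f} : L2fun f -> L2fun (fun x => a * f x).
Proof.
move=> [mf if_]; split.
  by apply: measurable_funM => //; exact: measurable_cst.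
apply: (eq_integrable _ _ _ _ (integrableZl _ (a ^+ 2) if_)) => //.
by move=> x _ /=; rewrite exprMn.
Qed.

Lemma L2_B {f h} : L2fun f -> L2fun h -> L2fun (fun x => f x - h x).
Proof.
move=> a b; have := L2_D a (L2_Z (-1) b).
suff -> : (fun x => f x - h x) = (fun x => f x + -1 * h x) by [].
by apply/funext => x; rewrite mulN1r.
Qed.

Lemma L2_prod {f h} : L2fun f -> L2fun h ->
  mu.-integrable setT (EFin \o (fun x => `|f x| * `|h x|)).
Proof.
move=> [mf if_] [mh ih].
apply: (@int_dom _ (fun x => f x ^+ 2 + h x ^+ 2)).
- apply: measurable_funM; apply: measurableT_comp => //.
- exact: int_D.
move=> x; rewrite ger0_norm ?mulr_ge0//.
have := sqr_ge0 (`|f x| - `|h x|).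
rewrite -(real_normK (num_real (f x))) -(real_normK (num_real (h x))); nra.
Qed.

Lemma L2norm_ge0 f : 0 <= L2norm f.
Proof. exact: sqrtr_ge0. Qed.

Lemma L2_sq {f} : L2fun f -> L2norm f ^+ 2 = Rintegral mu setT (fun x => f x ^+ 2).
Proof.
move=> _; rewrite sqr_sqrtr//; apply: Rintegral_ge0 => x _; exact: sqr_ge0.
Qed.

Lemma CS_aux (P A B : R) : 0 <= P -> 0 <= A -> 0 <= B ->
  (forall t, 2 * t * P <= t ^+ 2 * A + B) -> P <= Num.sqrt A * Num.sqrt B.
Proof.
move=> P0 A0 B0 h.
rewrite -sqrtrM// -(ger0_norm P0) -sqrtr_sqr ler_sqrt ?mulr_ge0//.
have [->|Pp] := eqVneq P 0; first by rewrite expr0n/= mulr_ge0.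
have Pp' : 0 < P by rewrite lt_neqAle eq_sym Pp.
have [A0'|Ap] := eqVneq A 0.
  have e : 2 * ((B + 1) / (2 * P)) * P = B + 1 by field.
  have := h ((B + 1) / (2 * P)); rewrite A0' mulr0 add0r e; lra.
have Ap' : 0 < A by rewrite lt_neqAle eq_sym Ap.
have e1 : 2 * (P / A) * P = 2 * (P ^+ 2 / A) by field.
have e2 : (P / A) ^+ 2 * A = P ^+ 2 / A by field.
have := h (P / A); rewrite e1 e2 => h2.
have : P ^+ 2 / A <= B by lra.
by rewrite ler_pdivrMr // mulrC.
Qed.

Lemma CS {f h} : L2fun f -> L2fun h ->
  Rintegral mu setT (fun x => `|f x| * `|h x|) <= L2norm f * L2norm h.
Proof.
move=> Lf Lh; apply: CS_aux.
- by apply: Rintegral_ge0 => x _; rewrite mulr_ge0.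
- by apply: Rintegral_ge0 => x _; exact: sqr_ge0.
- by apply: Rintegral_ge0 => x _; exact: sqr_ge0.
move=> t.
rewrite -mulrA -RintegralZl//; last exact: L2_prod.
rewrite -[t ^+ 2 * _]RintegralZl//; last exact: L2_int.
rewrite -RintegralD//; last 2 first.
- exact: (int_Z (t ^+ 2) (L2_int Lf)).
- exact: L2_int.
rewrite -RintegralZl//; last exact: (int_Z t (L2_prod Lf Lh)).
apply: le_Rintegral => //.
- exact: (int_Z 2 (int_Z t (L2_prod Lf Lh))).
- exact: (int_D (int_Z (t ^+ 2) (L2_int Lf)) (L2_int Lh)).
move=> x _.
have := sqr_ge0 (t * `|f x| - `|h x|).
rewrite -(real_normK (num_real (f x))) -(real_normK (num_real (h x))).
nra.
Qed.
End L2.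

Section L2b.
Context {R : realType}.
Local Notation mu := (@lebesgue_measure R).
Local Notation mEP := measurable_realfun.measurable_EFinP.
Implicit Types f h : R -> R.

Lemma L2norm_D {f h} : L2fun f -> L2fun h ->
  L2norm (fun x => f x + h x) <= L2norm f + L2norm h.
Proof.
move=> Lf Lh.
have S0 : 0 <= L2norm f + L2norm h by rewrite addr_ge0 ?L2norm_ge0.
rewrite -[X in _ <= X](ger0_norm S0) -sqrtr_sqr /L2norm ler_sqrt ?sqr_ge0//.
have Lp := L2_prod Lf Lh.
apply: (@le_trans _ _ (Rintegral mu setT (fun x => f x ^+ 2 + h x ^+ 2)
     + 2 * Rintegral mu setT (fun x => `|f x| * `|h x|))).
  rewrite -RintegralZl// -RintegralD//; last 2 first.
  - exact: (int_D (L2_int Lf) (L2_int Lh)).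
  - exact: (int_Z 2 Lp).
  apply: le_Rintegral => //.
  - exact: (L2_int (L2_D Lf Lh)).
  - exact: (int_D (int_D (L2_int Lf) (L2_int Lh)) (int_Z 2 Lp)).
  move=> x _.
  have : f x * h x <= `|f x| * `|h x| by rewrite -normrM ler_norm.
  rewrite sqrrD; lra.
rewrite RintegralD//; [|exact: L2_int Lf|exact: L2_int Lh].
have := CS Lf Lh.
rewrite sqrrD -/(L2norm f) -/(L2norm h) (L2_sq Lf) (L2_sq Lh).
lra.
Qed.

Lemma L2norm_Z a f : L2fun f -> L2norm (fun x => a * f x) = `|a| * L2norm f.
Proof.
move=> Lf; rewrite /L2norm.
under eq_Rintegral do rewrite exprMn.
rewrite RintegralZl//; last exact: L2_int Lf.
by rewrite sqrtrM ?sqr_ge0// sqrtr_sqr.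
Qed.

Lemma L2norm_sym f h : L2norm (fun x => f x - h x) = L2norm (fun x => h x - f x).
Proof.
by rewrite /L2norm; under eq_Rintegral do rewrite -sqrrN opprB.
Qed.

Lemma L2norm_H1 f f' : L2norm f' <= H1norm f f'.
Proof.
rewrite /H1norm -[X in X <= _](ger0_norm (L2norm_ge0 f')) -sqrtr_sqr.
by rewrite ler_sqrt ?addr_ge0 ?sqr_ge0// lerDr sqr_ge0.
Qed.

Lemma L2_ind01 : mu.-integrable setT (EFin \o (\1_`[(0:R), 1] : R -> R)).
Proof. exact: integrable_indic_itv. Qed.

End L2b.

Section chiL2.
Context {R : realType} (chi : R -> R) (Hchi : cutoff chi).
Local Notation mu := (@lebesgue_measure R).

Lemma chi'_L2 : L2fun (derive1 chi).
Proof.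
have [M hM] := chi'_bound Hchi.
have mc : measurable_fun setT (derive1 chi).
  exact: continuous_measurable_fun (chi'_cont Hchi).
split => //.
apply: (@int_dom _ _ (fun x => M ^+ 2 * (\1_`[(0:R), 1] x : R))).
- exact: measurable_funX.
- exact: int_Z _ L2_ind01.
move=> x; rewrite ger0_norm ?sqr_ge0//.
have := hM x; rewrite /indic; case: (_ \in _); rewrite ?mulr1 ?mulr0 => h.
- by rewrite -real_normK ?num_real// lerXn2r// ?nnegrE// (le_trans _ h).
- by have := normr_ge0 (derive1 chi x); rewrite -real_normK ?num_real//; nra.
Qed.

Lemma ux_L2 ub' c : L2fun ub' -> L2fun (ux chi ub' c).
Proof. by move=> h; apply: L2_D h (L2_Z c chi'_L2). Qed.

End chiL2.

Section meas.
Context {R : realType}.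
Local Notation mu := (@lebesgue_measure R).

Lemma gfunE (chi ub ub' : R -> R) (c : R) (rb : R -> R) (k x : R) :
  gfun chi ub ub' c rb k x = Gp (ux chi ub' c x) (rb x) k.
Proof. by []. Qed.

Lemma Gp_meas (v r : R -> R) (k : R) : measurable_fun setT v -> measurable_fun setT r ->
  measurable_fun setT (fun x => Gp (v x) (r x) k).
Proof.
move=> mv mr.
rewrite /Gp /g /Omega1 /g1 /g2.
have mn : forall f : R -> R, measurable_fun setT f -> measurable_fun setT (fun x => `|f x|).
  by move=> f mf; apply: measurableT_comp => //; exact: normr_measurable.
have mc : forall a : R, measurable_fun setT (fun _ : R => a) by move=> a; exact: measurable_cst.
apply: measurable_fun_ifT.
- apply: measurable_and.
    apply: measurable_fun_ler.
      apply: measurable_funD => //; apply: measurable_funD => //.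
        exact: mn.
      apply: measurable_funM => //; apply: mn; apply: measurable_funM => //.
    apply: measurable_funD => //; apply: measurable_funD => //.
      exact: measurable_funX.
    exact: measurable_funX.
  apply: measurable_and.
    exact: measurable_fun_ler.
  apply: measurable_fun_eqr => //.
  by apply: measurable_funD => //; apply: measurable_funM.
- apply: measurable_funD => //; apply: measurable_funD => //.
    exact: mn.
  apply: measurable_funM => //; apply: mn; apply: measurable_funM => //.
- apply: measurable_funD => //; apply: measurable_funD => //.
    exact: measurable_funX.
  exact: measurable_funX.
Qed.

Lemma Gp_range (a r k : R) : 0 <= Gp a r k - 1 <= a ^+ 2 + r ^+ 2.
Proof.
rewrite /Gp /g /Omega1 /g1 /g2; case: ifP => [/and3P[h _ _]|_].
  have := normr_ge0 a; have := normr_ge0 (r * k); rewrite mulr1.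
  by move=> *; apply/andP; split; lra.
have := sqr_ge0 a; have := sqr_ge0 r; by move=> *; apply/andP; split; lra.
Qed.

End meas.

Section F.
Context {R : realType}.
Local Notation mu := (@lebesgue_measure R).
Local Notation mEP := measurable_realfun.measurable_EFinP.
Implicit Types f h : R -> R.

Lemma ae_Rle f h (N : set R) : measurable_fun setT f ->
  mu.-integrable setT (EFin \o h) -> (forall x, 0 <= f x) -> (forall x, 0 <= h x) ->
  mu.-negligible N -> (forall x, ~ N x -> f x <= h x) ->
  Rintegral mu setT f <= Rintegral mu setT h.
Proof.
move=> mf ih f0 h0 hN hfh.
have le : (\int[mu]_x (EFin \o f) x <= \int[mu]_x (EFin \o h) x)%E.
  apply: ae_ge0_le_integral => //.
  - by move=> x _ /=; rewrite lee_fin.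
  - exact/mEP.
  - by move=> x _ /=; rewrite lee_fin.
  - by case/integrableP: ih.
  rewrite /= /prop_near1 /almost_everywhere /=.
  apply: (negligibleS _ hN) => x /= nP.
  apply: contrapT => nN; apply: nP => _ ; rewrite lee_fin; exact: hfh.
have hf := integrable_fin_num measurableT ih.
rewrite /Rintegral; apply: fine_le => //.
rewrite ge0_fin_numE; last by apply: integral_ge0 => x _; rewrite lee_fin.
apply: (le_lt_trans le); move: hf; rewrite fin_numElt => /andP[_ ->] //.
Qed.

Lemma Rint4 (p1 p2 p3 p4 : R -> R) :
  mu.-integrable setT (EFin \o p1) -> mu.-integrable setT (EFin \o p2) ->
  mu.-integrable setT (EFin \o p3) -> mu.-integrable setT (EFin \o p4) ->
  Rintegral mu setT (fun x => p1 x + p2 x + p3 x + p4 x) =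
  Rintegral mu setT p1 + Rintegral mu setT p2 + Rintegral mu setT p3 + Rintegral mu setT p4.
Proof.
move=> i1 i2 i3 i4.
have i12 := int_D i1 i2; have i123 := int_D i12 i3.
by rewrite RintegralD// RintegralD// RintegralD.
Qed.

Lemma part1 (chi : R -> R) (Hchi : cutoff chi) ub ub' c rb k :
  H1fun ub ub' -> L2fun rb ->
  mu.-integrable setT (fun x => (gfun chi ub ub' c rb k x - 1)%:E).
Proof.
case=> _ Lu _ Lr.
have La := @ux_L2 _ chi Hchi ub' c Lu.
apply: (@int_dom _ (fun x => gfun chi ub ub' c rb k x - 1)
                  (fun x => ux chi ub' c x ^+ 2 + rb x ^+ 2)).
- apply: measurable_funB; last exact: measurable_cst.
  exact: Gp_meas (L2_meas La) (L2_meas Lr).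
- exact: int_D (L2_int La) (L2_int Lr).
move=> x; rewrite gfunE; have /andP[h1 h2] := Gp_range (ux chi ub' c x) (rb x) k.
by rewrite ger0_norm.
Qed.

End F.

Section G.
Context {R : realType}.
Local Notation mu := (@lebesgue_measure R).
Implicit Types f h : R -> R.

Lemma part2_gen (a1 a2 r1 r2 : R -> R) (k1 k2 : R) :
  L2fun a1 -> L2fun a2 -> L2fun r1 -> L2fun r2 ->
  mu.-negligible [set x | (r1 x + k1 = 0 /\ r2 x + k2 <> 0)
                       \/ (r1 x + k1 <> 0 /\ r2 x + k2 = 0)] ->
  L1norm (fun x => Gp (a1 x) (r1 x) k1 - Gp (a2 x) (r2 x) k2)
  <= 2 * (L2norm a1 + L2norm a2 + L2norm r1 + L2norm r2) *
     (L2norm (fun x => a1 x - a2 x) + L2norm (fun x => r1 x - r2 x)).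
Proof.
move=> La1 La2 Lr1 Lr2 hN.
have Ld1 := L2_B La1 La2; have Ld2 := L2_B Lr1 Lr2.
set d1 := (fun x => a1 x - a2 x) in Ld1 *.
set d2 := (fun x => r1 x - r2 x) in Ld2 *.
have i1 := int_Z 2 (L2_prod La1 Ld1).
have i2 := int_Z 2 (L2_prod La2 Ld1).
have i3 := int_Z 2 (L2_prod Lr1 Ld2).
have i4 := int_Z 2 (L2_prod Lr2 Ld2).
apply: (@le_trans _ _ (Rintegral mu setT (fun x =>
    2 * (`|a1 x| * `|d1 x|) + 2 * (`|a2 x| * `|d1 x|) +
    2 * (`|r1 x| * `|d2 x|) + 2 * (`|r2 x| * `|d2 x|)))).
  apply: (@ae_Rle _ _ _ _ _ _ _ _ hN).
  - apply: measurableT_comp; first exact: normr_measurable.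
    apply: measurable_funB; apply: Gp_meas; exact: L2_meas.
  - exact: (int_D (int_D (int_D i1 i2) i3) i4).
  - by [].
  - by move=> x; rewrite !addr_ge0// !mulr_ge0.
  move=> x nN.
  have hiff : r1 x + k1 = 0 <-> r2 x + k2 = 0.
    split => e.
      apply: contrapT => ne; apply: nN; by left.
    apply: contrapT => ne; apply: nN; by right.
  apply: (le_trans (Gp_bound (a1 x) (r1 x) k1 (a2 x) (r2 x) k2 hiff)).
  rewrite /d1 /d2; lra.
rewrite Rint4 // !RintegralZl //; try exact: L2_prod.
have c1 := CS La1 Ld1; have c2 := CS La2 Ld1.
have c3 := CS Lr1 Ld2; have c4 := CS Lr2 Ld2.
have := L2norm_ge0 d1; have := L2norm_ge0 d2.
have := L2norm_ge0 a1; have := L2norm_ge0 a2.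
have := L2norm_ge0 r1; have := L2norm_ge0 r2.
rewrite -/d1 -/d2.
nra.
Qed.

End G.

Theorem lemma7p2 (R : realType) (chi : R -> R) (Hchi : cutoff chi) :
  (forall (ub ub' : R -> R) (c : R) (rb : R -> R) (k : R),
     H1fun ub ub' -> L2fun rb ->
     (@lebesgue_measure R).-integrable setT
        (fun x => (gfun chi ub ub' c rb k x - 1)%:E))
  /\
  (exists C : R -> R -> R -> R -> R,
     forall (ub1 ub1' : R -> R) (c1 : R) (rb1 : R -> R) (k1 : R)
            (ub2 ub2' : R -> R) (c2 : R) (rb2 : R -> R) (k2 : R),
     H1fun ub1 ub1' -> L2fun rb1 -> H1fun ub2 ub2' -> L2fun rb2 ->
     zero_compat rb1 k1 rb2 k2 ->
     L1norm (fun x => gfun chi ub1 ub1' c1 rb1 k1 x - gfun chi ub2 ub2' c2 rb2 k2 x)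
       <= C (L2norm (ux chi ub1' c1)) (L2norm (ux chi ub2' c2))
            (L2norm rb1) (L2norm rb2)
          * (L2norm (fun x => ux chi ub1' c1 x - ux chi ub2' c2 x)
             + L2norm (fun x => rb1 x - rb2 x)))
  /\
  (forall (ubn ubn' : nat -> R -> R) (cn : nat -> R) (rbn : nat -> R -> R)
          (kn : nat -> R)
          (ub ub' : R -> R) (c : R) (rb : R -> R) (k : R),
     (forall n, H1fun (ubn n) (ubn' n)) -> (forall n, L2fun (rbn n)) ->
     H1fun ub ub' -> L2fun rb ->
     (fun n => H1norm (fun x => ubn n x - ub x) (fun x => ubn' n x - ub' x)
               + `|cn n - c|
               + L2norm (fun x => rbn n x - rb x) + `|kn n - k|) @ \oo --> 0%R ->
     (forall n, zero_compat rb k (rbn n) (kn n)) ->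
     (fun n => L1norm (fun x => (gfun chi (ubn n) (ubn' n) (cn n) (rbn n) (kn n) x - 1)
                                - (gfun chi ub ub' c rb k x - 1))) @ \oo --> 0%R).
Proof.
have P2 : forall (ub1 ub1' : R -> R) (c1 : R) (rb1 : R -> R) (k1 : R)
            (ub2 ub2' : R -> R) (c2 : R) (rb2 : R -> R) (k2 : R),
     H1fun ub1 ub1' -> L2fun rb1 -> H1fun ub2 ub2' -> L2fun rb2 ->
     zero_compat rb1 k1 rb2 k2 ->
     L1norm (fun x => gfun chi ub1 ub1' c1 rb1 k1 x - gfun chi ub2 ub2' c2 rb2 k2 x)
       <= 2 * (L2norm (ux chi ub1' c1) + L2norm (ux chi ub2' c2)
            + L2norm rb1 + L2norm rb2)
          * (L2norm (fun x => ux chi ub1' c1 x - ux chi ub2' c2 x)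
             + L2norm (fun x => rb1 x - rb2 x)).
  move=> ub1 ub1' c1 rb1 k1 ub2 ub2' c2 rb2 k2 [_ L1 _] Lr1 [_ L2 _] Lr2 hz.
  exact: (part2_gen _ _ _ _ k1 k2 (ux_L2 _ Hchi ub1' c1 L1) (ux_L2 _ Hchi ub2' c2 L2) Lr1 Lr2 hz).
split; [|split].
- by move=> ub ub' c rb k Hu Hr; exact: (@part1 _ chi Hchi).
- by exists (fun n1 n2 n3 n4 => 2 * (n1 + n2 + n3 + n4)).
move=> ubn ubn' cn rbn kn ub ub' c rb k Hn Lrn Hu Lr he hz.
set e := (fun n => _) in he.
have [_ Lu _] := Hu.
have La := ux_L2 _ Hchi ub' c Lu.
have Lc := chi'_L2 _ Hchi.
set M := L2norm (derive1 chi).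
set A := L2norm (ux chi ub' c).
set B := L2norm rb.
have M0 : 0 <= M by exact: L2norm_ge0.
have A0 : 0 <= A by exact: L2norm_ge0.
have B0 : 0 <= B by exact: L2norm_ge0.
have bnd : forall n, L1norm (fun x => (gfun chi (ubn n) (ubn' n) (cn n) (rbn n) (kn n) x - 1)
                                - (gfun chi ub ub' c rb k x - 1))
     <= 2 * (A + (A + e n * (1 + M)) + B + (B + e n)) * (e n * (1 + M) + e n).
  move=> n.
  have [_ Lun _] := Hn n.
  have Lan := ux_L2 _ Hchi (ubn' n) (cn n) Lun.
  have e1 : 0 <= H1norm (fun x => ubn n x - ub x) (fun x => ubn' n x - ub' x) by exact: sqrtr_ge0.
  have e2 : 0 <= `|cn n - c| by [].
  have e3 : 0 <= L2norm (fun x => rbn n x - rb x) by exact: L2norm_ge0.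
  have e4 : 0 <= `|kn n - k| by [].
  have hH := L2norm_H1 (fun x => ubn n x - ub x) (fun x => ubn' n x - ub' x).
  have dA : L2norm (fun x => ux chi ub' c x - ux chi (ubn' n) (cn n) x) <= e n * (1 + M).
    have -> : (fun x => ux chi ub' c x - ux chi (ubn' n) (cn n) x) =
       (fun x => (ub' x - ubn' n x) + (c - cn n) * derive1 chi x).
      by apply/funext => x; rewrite /ux; ring.
    apply: (le_trans (L2norm_D (L2_B Lu Lun) (L2_Z _ Lc))).
    rewrite L2norm_Z // L2norm_sym distrC.
    rewrite -/M.
    have h1 : `|cn n - c| * M <= e n * M by rewrite ler_wpM2r // /e; lra.
    rewrite mulrDr mulr1; move: h1; rewrite /e; lra.
  have dR : L2norm (fun x => rb x - rbn n x) <= e n.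
    by rewrite L2norm_sym /e; lra.
  have nA : L2norm (ux chi (ubn' n) (cn n)) <= A + e n * (1 + M).
    have -> : ux chi (ubn' n) (cn n) =
       (fun x => ux chi ub' c x + (ux chi (ubn' n) (cn n) x - ux chi ub' c x)).
      by apply/funext => x; ring.
    apply: (le_trans (L2norm_D La (L2_B Lan La))).
    by rewrite L2norm_sym lerD2l.
  have nB : L2norm (rbn n) <= B + e n.
    have -> : rbn n = (fun x => rb x + (rbn n x - rb x)).
      by apply/funext => x; ring.
    apply: (le_trans (L2norm_D Lr (L2_B (Lrn n) Lr))).
    by rewrite L2norm_sym lerD2l.
  have -> : L1norm (fun x => (gfun chi (ubn n) (ubn' n) (cn n) (rbn n) (kn n) x - 1)
                                - (gfun chi ub ub' c rb k x - 1)) =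
            L1norm (fun x => gfun chi ub ub' c rb k x - gfun chi (ubn n) (ubn' n) (cn n) (rbn n) (kn n) x).
    rewrite /L1norm; apply: eq_Rintegral => x _.
    by rewrite -normrN; apply: f_equal; ring.
  apply: (le_trans (P2 _ _ _ _ _ _ _ _ _ _ Hu Lr (Hn n) (Lrn n) (hz n))).
  have := L2norm_ge0 (ux chi (ubn' n) (cn n)); have := L2norm_ge0 (rbn n).
  have := L2norm_ge0 (fun x => ux chi ub' c x - ux chi (ubn' n) (cn n) x).
  have := L2norm_ge0 (fun x => rb x - rbn n x).
  rewrite -/A -/B; move=> *.
  apply: ler_pM.
  - by rewrite mulr_ge0// !addr_ge0.
  - by rewrite addr_ge0.
  - by rewrite ler_wpM2l// lerD// lerD// lerD.
  - exact: lerD.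
have e0 : forall n, 0 <= e n.
  move=> n; rewrite /e !addr_ge0 ?L2norm_ge0//; exact: sqrtr_ge0.
set K := 2 * (2 * A + 2 * B + (2 + M)) * (2 + M).
apply: (@squeeze_cvgr _ _ _ _ (fun _ => 0) (fun n => K * e n) _ _ 0).
- near=> n.
  have en : e n < 1 by near: n; exact: (cvgr_lt 0 he 1 ltr01).
  apply/andP; split.
    by apply: Rintegral_ge0 => x _.
  apply: (le_trans (bnd n)).
  rewrite /K -subr_ge0.
  have -> : 2 * (2 * A + 2 * B + (2 + M)) * (2 + M) * e n -
    2 * (A + (A + e n * (1 + M)) + B + (B + e n)) * (e n * (1 + M) + e n) =
    2 * (e n * ((2 + M) ^+ 2 * (1 - e n))) by ring.
  apply: mulr_ge0 => //; apply: mulr_ge0; first exact: e0.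
  apply: mulr_ge0; first exact: sqr_ge0.
  lra.
- exact: cvg_cst.
- by rewrite -(mulr0 K); apply: cvgMr.
Unshelve. all: by end_near. Qed.
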